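(* Consider the following two-player Bayesian contest. Fix real $a\neq0$, $b>0$, $c>0$. Each player's private cost type is drawn independently from a common distribution $F$ with support $[\alpha,\beta]\subset(0,c)$ and nondegenerate variance. Let $M_1=E[\theta]$, $M_2=E[\theta^2]$, $\Delta=c-M_1$, $\sigma_\theta^2=M_2-M_1^2>0$, $\kappa=b/a$, $\omega=\sigma_\theta^2/a^2$, $\zeta=\frac{b^2-a\Delta}{a^2}$. In the affine relaxation, actions are arbitrary real numbers and a type-$\theta$ player who chooses $\tilde x\in\mathbb R$ against an opponent using strategy $x(\cdot)$ receives interim utility $\int_\alpha^\beta\bigl[P(\tilde x,x(\theta_y))-\theta\tilde x\bigr]\,dF(\theta_y)$, where $P(x,y)=\tfrac12+(x-y)\bigl(c-b(x+y)+axy\bigr)$ (no truncation). Then the affine relaxation has a unique symmetric Bayesian Nash equilibrium; it is affine and strictly decreasing in type, and expected effort equals $$E[x]=\kappa-\frac{\operatorname{sgn}(a)}{\sqrt2}\sqrt{\zeta+\sqrt{\zeta^2+\omega}}.$$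
   Context: A symmetric Bayesian Nash equilibrium is a strategy $x:[\alpha,\beta]\to\mathbb R$ (with finite first and second moments under $F$) such that, when the opponent uses $x(\cdot)$, $x(\theta)$ maximizes interim utility for every type $\theta$. *)

(* Defs.v *)
From mathcomp Require Import all_boot all_order all_algebra.
From mathcomp Require Import all_classical all_reals all_analysis.
Set Implicit Arguments. Unset Strict Implicit. Unset Printing Implicit Defensive.
Import Order.TTheory GRing.Theory Num.Theory.
Import numFieldNormedType.Exports.
Local Open Scope classical_set_scope.
Local Open Scope ring_scope.

Definition contest_payoff {R : realType} (a b c x y : R) : R :=
  1 / 2 + (x - y) * (c - b * (x + y) + a * x * y).

Definition measure_support {R : realType} (F : probability R R) : set R :=
  [set t | forall e : R, 0 < e -> (0 < F (ball t e))%E].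

Definition interim_utility {R : realType} (F : probability R R)
  (a b c alpha beta : R) (x : R -> R) (theta xt : R) : \bar R :=
  (\int[F]_(ty in [set` `[alpha, beta]]) (contest_payoff a b c xt (x ty) - theta * xt)%:E)%E.

Definition symmetric_BNE {R : realType} (F : probability R R)
  (a b c alpha beta : R) (x : R -> R) : Prop :=
  [/\ measurable_fun [set` `[alpha, beta]] x,
      F.-integrable [set` `[alpha, beta]] (fun t => (x t)%:E),
      F.-integrable [set` `[alpha, beta]] (fun t => (x t ^+ 2)%:E) &
      forall theta, alpha <= theta <= beta -> forall xt : R,
        (interim_utility F a b c alpha beta x theta xt
          <= interim_utility F a b c alpha beta x theta (x theta))%E].

(* Main.v *)
Require Import Defs.
From mathcomp Require Import all_boot all_order all_algebra.
From mathcomp Require Import all_classical all_reals all_analysis.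
From mathcomp Require Import ring lra.
Import Order.TTheory GRing.Theory Num.Theory.
Import numFieldNormedType.Exports.
Local Open Scope classical_set_scope.
Local Open Scope ring_scope.
Section Integrals.
Context {R : realType} (F : probability R R) (alpha beta : R).
Local Notation D := [set` `[alpha, beta]].

Lemma mD : measurable D.
Proof. exact: measurable_itv. Qed.

Lemma int_EFin (f : R -> R) : F.-integrable D (EFin \o f) ->
  (\int[F]_(t in D) (f t)%:E)%E = (Rintegral F D f)%:E.
Proof. by move=> h; rewrite /Rintegral fineK //; exact: integrable_fin_num. Qed.

Lemma int_comb (f : R -> R) K0 K1 K2 :
  F.-integrable D (EFin \o f) -> F.-integrable D (EFin \o (fun t => f t ^+ 2)) ->
  F.-integrable D (EFin \o (fun t => K0 + K1 * f t + K2 * f t ^+ 2)).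
Proof.
move=> i1 i2.
have -> : EFin \o (fun t => K0 + K1 * f t + K2 * f t ^+ 2) =
  ((EFin \o cst K0) \+ (fun t => K1%:E * (EFin \o f) t)
   \+ (fun t => K2%:E * (EFin \o (fun t => (f t ^+ 2)%R)) t))%E.
  by apply/funext => t /=; rewrite !EFinD !EFinM.
apply: integrableD; first exact: mD.
  apply: integrableD; first exact: mD.
    exact: finite_measure_integrable_cst mD.
  exact: integrableZl mD _ _ i1.
exact: integrableZl mD _ _ i2.
Qed.

Lemma Rint_comb (f : R -> R) K0 K1 K2 : F D = 1%E ->
  F.-integrable D (EFin \o f) -> F.-integrable D (EFin \o (fun t => f t ^+ 2)) ->
  Rintegral F D (fun t => K0 + K1 * f t + K2 * f t ^+ 2) =
  K0 + K1 * Rintegral F D f + K2 * Rintegral F D (fun t => f t ^+ 2).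
Proof.
move=> FD i1 i2.
have i3 : F.-integrable D (EFin \o (fun t => K0 + K1 * f t)).
  have := @int_comb f K0 K1 0 i1 i2.
  apply: eq_integrable; first exact: mD.
  by move=> t _ /=; rewrite mul0r addr0.
have iZ : forall (g : R -> R) k, F.-integrable D (EFin \o g) ->
    F.-integrable D (EFin \o (fun t => k * g t)).
  move=> g k ig; have := integrableZl mD k ig.
  by apply: eq_integrable; first exact: mD.
rewrite (RintegralD mD i3 (iZ _ K2 i2)).
rewrite (RintegralD mD (finite_measure_integrable_cst F K0 mD) (iZ _ K1 i1)).
rewrite Rintegral_cst; last exact: mD.
rewrite !RintegralZl //; try exact: mD.
have -> : fine (F D) = 1 by rewrite FD.
by rewrite mulr1.
Qed.

Lemma FD_fin : (F D < +oo)%E.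
Proof. exact: (le_lt_trans (probability_le1 F mD) (ltry 1)). Qed.

Lemma int_id : F.-integrable D (EFin \o (fun t => t)).
Proof.
apply: measurable_bounded_integrable; [exact: mD|exact: FD_fin| |].
  exact: measurable_id.
exists (`|alpha| + `|beta|); split; first exact: num_real.
move=> M HM t /=; rewrite in_itv /= => /andP[h1 h2].
apply: le_trans (ltW HM).
rewrite ler_norml; apply/andP; split.
  have := ler_norm (- alpha); have := normr_ge0 beta; rewrite normrN; lra.
have := ler_norm alpha; have := ler_norm beta; have := normr_ge0 alpha; lra.
Qed.

Lemma int_sq : F.-integrable D (EFin \o (fun t => t ^+ 2)).
Proof.
apply: measurable_bounded_integrable; [exact: mD|exact: FD_fin| |].
  exact: measurable_realfun.exprn_measurable.
exists ((`|alpha| + `|beta|) ^+ 2); split; first exact: num_real.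
move=> M HM t /=; rewrite in_itv /= => /andP[h1 h2].
apply: le_trans (ltW HM).
rewrite normrX; apply: lerXn2r; rewrite ?nnegrE ?addr_ge0 //.
rewrite ler_norml; apply/andP; split.
  have := ler_norm (- alpha); have := normr_ge0 beta; rewrite normrN; lra.
have := ler_norm alpha; have := ler_norm beta; have := normr_ge0 alpha; lra.
Qed.
End Integrals.
Section Support.
Context {R : realType} (F : probability R R) (alpha beta : R).
Local Notation D := [set` `[alpha, beta]].
Hypothesis supp : measure_support F = D.

Lemma null_ball s : ~ D s -> exists2 e : R, 0 < e & F (ball s e) = 0%E.
Proof.
rewrite -supp /measure_support /= => /existsNP [e /not_implyP [e0 h]].
exists e => //; apply/eqP; rewrite eq_le measure_ge0 andbT.
by rewrite leNgt; apply/negP.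
Qed.

Lemma int_null p q : p <= q -> (forall s, p <= s <= q -> ~ D s) ->
  F [set` `]p, q[] = 0%E.
Proof.
move=> pq hD.
pose S := [set t | p <= t <= q /\ F [set` `]p, t[] = 0%E].
have Sp : S p.
  split; first by rewrite lexx pq.
  rewrite set_itv_ge; first exact: measure0.
  by rewrite bnd_simp ltxx.
have hs : has_sup S.
  split; first by exists p.
  by exists q => t [/andP[_ ->]].
set s := sup S.
have ps : p <= s by exact: sup_upper_bound.
have sq : s <= q.
  apply: ge_sup; first by exists p.
  by move=> t [/andP[_ ->]].
have [e e0 Fb] : exists2 e : R, 0 < e & F (ball s e) = 0%E.
  by apply: null_ball; apply: hD; rewrite ps sq.
have [t [/andP[pt tq] Ft] st] := sup_adherent e0 hs.
rewrite -/s in st.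
have key : forall r, p <= r -> r <= s + e / 2 -> F [set` `]p, r[] = 0%E.
  move=> r pr rs; apply/eqP; rewrite eq_le measure_ge0 andbT.
  have sub : [set` `]p, r[] `<=` [set` `]p, t[] `|` ball s e.
    move=> x /=; rewrite !in_itv /= => /andP[px xr].
    have [xt|tx] := ltP x t; first by left; rewrite px.
    right; rewrite /ball /= ltr_norml; apply/andP; split; lra.
  apply: le_trans (le_measure _ _ _ sub) _.
  - by rewrite inE; exact: measurable_itv.
  - by rewrite inE; apply: measurableU; [exact: measurable_itv|exact: measurable_realfun.measurable_ball].
  apply: le_trans (measureU2 _ _ _) _.
  - exact: measurable_itv.
  - exact: measurable_realfun.measurable_ball.
  have e2l : forall x y : \bar R, x = y -> (x <= y)%E by move=> ? ? ->.
  apply: le_trans (leeD (e2l _ _ Ft) (e2l _ _ Fb)) _.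
  by rewrite adde0.
have [qse|qse] := leP q (s + e / 2).
  by apply: key.
have : S (s + e / 2).
  split; last by apply: key; lra.
  apply/andP; split; lra.
move/(sup_upper_bound hs); rewrite -/s => h; exfalso; lra.
Qed.

Lemma FD1 : alpha <= beta -> F D = 1%E.
Proof.
move=> ab.
have e2l : forall x y : \bar R, x = y -> (x <= y)%E by move=> ? ? ->.
pose G (n : nat) := [set` `]alpha - n.+1%:R, alpha - n.+1%:R^-1[] `|`
                    [set` `]beta + n.+1%:R^-1, beta + n.+1%:R[].
have Nfacts : forall n : nat, (1 : R) <= n.+1%:R /\ 0 < (n.+1%:R : R)^-1 <= 1.
  move=> n; split; first by rewrite ler1n.
  by rewrite invr_gt0 ltr0n /= invf_le1 ?ler1n ?ltr0n.
have nU : forall u v : R, 0 < v -> v <= 1 -> 1 <= u ->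
    F ([set` `]alpha - u, alpha - v[] `|` [set` `]beta + v, beta + u[]) = 0%E.
  move=> u v v0 v1 u1.
  apply/eqP; rewrite eq_le measure_ge0 andbT.
  apply: le_trans (measureU2 _ _ _) _; try exact: measurable_itv.
  have h1 : F [set` `]alpha - u, alpha - v[] = 0%E.
    apply: int_null; first lra.
    by move=> s /andP[_ h]; rewrite /= in_itv /=; apply/negP; rewrite negb_and -ltNge; apply/orP; left; lra.
  have h2 : F [set` `]beta + v, beta + u[] = 0%E.
    apply: int_null; first lra.
    by move=> s /andP[h _]; rewrite /= in_itv /=; apply/negP; rewrite negb_and -!ltNge; apply/orP; right; lra.
  apply: le_trans (leeD (e2l _ _ h1) (e2l _ _ h2)) _.
  by rewrite adde0.
have nG : forall n, F.-negligible (G n).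
  move=> n; have [N1 /andP[iN0 iN1]] := Nfacts n.
  exists (G n); split => //.
  - by apply: measurableU; exact: measurable_itv.
  exact: nU.
have [A [mA FA sub]] := negligible_bigcup nG.
have cov : ~` D `<=` \bigcup_n G n.
  move=> t /= Dt.
  have [ta|tA] := ltP t alpha.
    pose d := alpha - t.
    have d0 : 0 < d by rewrite /d; lra.
    have [n hn] : exists n : nat, d + d^-1 < n.+1%:R.
      by exists (Num.trunc (d + d^-1)); exact: truncnS_gt.
    have id0 : 0 < d^-1 by rewrite invr_gt0.
    have hN : n.+1%:R^-1 < d.
      by rewrite -[d]invrK ltf_pV2 ?posrE ?invr_gt0 ?ltr0n //; lra.
    exists n => //; left; rewrite /= in_itv /=; move: hn hN; rewrite /d; move: (n.+1%:R : R) => N; move: (N^-1) => iN hn hN; apply/andP; split; lra.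
  have bt : beta < t.
    rewrite ltNge; apply/negP => tb; apply: Dt; rewrite /= in_itv /= tA tb //.
  pose d := t - beta.
  have d0 : 0 < d by rewrite /d; lra.
  have [n hn] : exists n : nat, d + d^-1 < n.+1%:R.
    by exists (Num.trunc (d + d^-1)); exact: truncnS_gt.
  have id0 : 0 < d^-1 by rewrite invr_gt0.
  have hN : n.+1%:R^-1 < d.
    by rewrite -[d]invrK ltf_pV2 ?posrE ?invr_gt0 ?ltr0n //; lra.
  exists n => //; right; rewrite /= in_itv /=; move: hn hN; rewrite /d; move: (n.+1%:R : R) => N; move: (N^-1) => iN hn hN; apply/andP; split; lra.
have mD : measurable D by exact: measurable_itv.
have Nneg : F (~` D) = 0%E.
  apply/eqP; rewrite eq_le measure_ge0 andbT.
  apply: le_trans (le_measure _ _ _ (subset_trans cov sub)) _.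
  - by rewrite inE; exact: measurableC.
  - by rewrite inE.
  exact: e2l.
have h : (1 - F D = 0)%E.
  by rewrite -(probability_setC F mD); exact: Nneg.
move: h; rewrite -[F D]fineK ?fin_num_measure // => /eqP.
rewrite -EFinB eqe subr_eq0 => /eqP <-//.
Qed.
End Support.
Section Alg.
Context {R : realType}.

Lemma best_Ale0 (A L y : R) :
  (forall z, z * L - z ^+ 2 * A <= y * L - y ^+ 2 * A) -> A <= 0 -> L = 0.
Proof.
move=> H A0; apply/eqP; apply/negPn/negP => L0.
pose K := `|y * L - y ^+ 2 * A| + 1.
have := H (K / L).
have -> : K / L * L = K by rewrite mulfVK.
have : 0 <= - ((K / L) ^+ 2 * A) by rewrite oppr_ge0 mulr_ge0_le0 // sqr_ge0.
have := ler_norm (y * L - y ^+ 2 * A).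
rewrite /K; lra.
Qed.

Lemma best_Agt0 (A L y : R) :
  (forall z, z * L - z ^+ 2 * A <= y * L - y ^+ 2 * A) -> 0 < A -> y = L / (2 * A).
Proof.
move=> H A0; set z := L / (2 * A).
have hL : L = 2 * A * z by rewrite /z mulrCA mulfV ?mulr1 // mulf_neq0 // gt_eqF.
have := H z; rewrite hL => h.
have h2 : A * (y - z) ^+ 2 <= 0.
  have -> : A * (y - z) ^+ 2 = - ((y * (2 * A * z) - y ^+ 2 * A) - (z * (2 * A * z) - z ^+ 2 * A)) by ring.
  lra.
have : (y - z) ^+ 2 = 0.
  apply/eqP; rewrite eq_le sqr_ge0 andbT.
  by rewrite -(pmulr_rle0 _ A0).
by move/eqP; rewrite sqrf_eq0 subr_eq0 => /eqP.
Qed.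

Lemma quartic (a b Delta s2 m1 m2 : R) :
  let u := b - a * m1 in
  2 * u * m1 = Delta - a * m2 ->
  4 * u ^+ 2 * m2 = (Delta - a * m2) ^+ 2 + s2 ->
  4 * u ^+ 4 - 4 * u ^+ 2 * (b ^+ 2 - a * Delta) - a ^+ 2 * s2 = 0.
Proof.
move=> u E1 E2.
have E3 : s2 = 4 * u ^+ 2 * m2 - (2 * u * m1) ^+ 2 by rewrite E1 E2; ring.
have E4 : Delta = 2 * u * m1 + a * m2 by rewrite E1; ring.
rewrite E3 E4 /u; ring.
Qed.

Lemma root_uniq (Z C w w' : R) : 0 < C -> 0 < w -> 0 < w' ->
  4 * w ^+ 2 - 4 * w * Z - C = 0 -> 4 * w' ^+ 2 - 4 * w' * Z - C = 0 -> w = w'.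
Proof.
move=> C0 w0 w'0 h h'.
have : (w - w') * (w + w' - Z) = 0.
  have -> : (w - w') * (w + w' - Z) = ((4 * w ^+ 2 - 4 * w * Z - C) - (4 * w' ^+ 2 - 4 * w' * Z - C)) / 4 by field.
  by rewrite h h' subrr mul0r.
move/eqP; rewrite mulf_eq0 => /orP[/eqP|/eqP hz]; first by move/eqP; rewrite subr_eq0 => /eqP.
have hZ : Z = w + w' by lra.
rewrite hZ in h; exfalso; nra.
Qed.

End Alg.
Section Main.
Context {R : realType} (F : probability R R) (a b c alpha beta : R).
Local Notation D := [set` `[alpha, beta]].
Hypothesis FD : F D = 1%E.
Local Notation RI := (Rintegral F D).

Lemma util (y : R -> R) th z :
  F.-integrable D (EFin \o y) -> F.-integrable D (EFin \o (fun t => y t ^+ 2)) ->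
  interim_utility F a b c alpha beta y th z =
  (1/2 - c * RI y + b * RI (fun t => y t ^+ 2) + z * (c - th - a * RI (fun t => y t ^+ 2))
    - z ^+ 2 * (b - a * RI y))%:E.
Proof.
move=> i1 i2; rewrite /interim_utility.
rewrite (eq_integral (fun t => (1/2 + c * z - b * z ^+ 2 - th * z + (a * z ^+ 2 - c) * y t
                                + (b - a * z) * y t ^+ 2)%:E)); last first.
  by move=> t _; rewrite /contest_payoff; congr EFin; ring.
rewrite (@int_EFin _ F alpha beta _ (int_comb F alpha beta y _ _ _ i1 i2)) Rint_comb //; congr EFin; ring.
Qed.

Lemma moments (p q : R) :
  RI (fun t => p + q * t) = p + q * RI (fun t => t) /\
  RI (fun t => (p + q * t) ^+ 2) = p ^+ 2 + 2 * p * q * RI (fun t => t) + q ^+ 2 * RI (fun t => t ^+ 2).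
Proof.
split.
  rewrite (@eq_Rintegral _ _ _ F D (fun t => p + q * t + 0 * t ^+ 2)); last by move=> t _; ring.
  by rewrite Rint_comb //; [ring | exact: int_id | exact: int_sq].
rewrite (@eq_Rintegral _ _ _ F D (fun t => p ^+ 2 + (2 * p * q) * t + q ^+ 2 * t ^+ 2)); last by move=> t _; ring.
by rewrite Rint_comb //; [exact: int_id | exact: int_sq].
Qed.

Lemma affine_int (p q : R) :
  F.-integrable D (EFin \o (fun t => p + q * t)) /\
  F.-integrable D (EFin \o (fun t => (p + q * t) ^+ 2)).
Proof.
split.
  have := int_comb F alpha beta (fun t => t) p q 0 (int_id F alpha beta) (int_sq F alpha beta).
  by apply: eq_integrable; [exact: mD| move=> t _ /=; rewrite mul0r addr0].
have := int_comb F alpha beta (fun t => t) (p ^+ 2) (2 * p * q) (q ^+ 2) (int_id F alpha beta) (int_sq F alpha beta).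
by apply: eq_integrable; [exact: mD| move=> t _ /=; congr EFin; ring].
Qed.

Lemma bne_char y : alpha < beta -> symmetric_BNE F a b c alpha beta y ->
  0 < b - a * RI y /\
  forall th, alpha <= th <= beta ->
    y th = (c - th - a * RI (fun t => y t ^+ 2)) / (2 * (b - a * RI y)).
Proof.
move=> ab [my iy iy2 hb].
have H : forall th, alpha <= th <= beta -> forall z,
   z * (c - th - a * RI (fun t => y t ^+ 2)) - z ^+ 2 * (b - a * RI y) <=
   y th * (c - th - a * RI (fun t => y t ^+ 2)) - y th ^+ 2 * (b - a * RI y).
  move=> th hth z; have := hb th hth z.
  rewrite !util // lee_fin; lra.
have A0 : 0 < b - a * RI y.
  rewrite ltNge; apply/negP => A0.
  have hal : alpha <= alpha <= beta by rewrite lexx ltW.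
  have hbe : alpha <= beta <= beta by rewrite lexx ltW.
  have e1 := @best_Ale0 _ _ _ _ (H alpha hal) A0.
  have e2 := @best_Ale0 _ _ _ _ (H beta hbe) A0.
  lra.
split => // th hth.
exact: (@best_Agt0 _ _ _ _ (H th hth) A0).
Qed.

End Main.

Lemma exist_alg {R : realType} (a b Delta s2 u m1 m2 : R) : a != 0 -> u != 0 ->
  a * m1 = b - u -> m2 = m1 ^+ 2 + s2 / (4 * u ^+ 2) ->
  4 * u ^+ 4 - 4 * u ^+ 2 * (b ^+ 2 - a * Delta) - a ^+ 2 * s2 = 0 ->
  2 * u * m1 + a * m2 = Delta.
Proof.
move=> a0 u0 am1 hm2 hq.
have k0 : a * (4 * u ^+ 2) != 0 by rewrite mulf_neq0 // mulf_neq0 // expf_neq0.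
apply: (mulfI k0).
have -> : a * (4 * u ^+ 2) * (2 * u * m1 + a * m2) =
   8 * u ^+ 3 * (a * m1) + 4 * u ^+ 2 * (a * m1) ^+ 2 + a ^+ 2 * s2.
  by rewrite hm2; field.
rewrite am1.
have -> : a ^+ 2 * s2 = 4 * u ^+ 4 - 4 * u ^+ 2 * (b ^+ 2 - a * Delta) by lra.
ring.
Qed.

Lemma quartic_v {R : realType} (a b Delta s2 zeta omega v u : R) :
  u ^+ 2 = a ^+ 2 * v -> zeta * a ^+ 2 = b ^+ 2 - a * Delta -> s2 = omega * a ^+ 2 ->
  4 * v ^+ 2 - 4 * v * zeta - omega = 0 ->
  4 * u ^+ 4 - 4 * u ^+ 2 * (b ^+ 2 - a * Delta) - a ^+ 2 * s2 = 0.
Proof.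
move=> hu hz hs hv.
have -> : u ^+ 4 = (u ^+ 2) ^+ 2 by ring.
rewrite hu -hz hs.
have -> : 4 * (a ^+ 2 * v) ^+ 2 - 4 * (a ^+ 2 * v) * (zeta * a ^+ 2) - a ^+ 2 * (omega * a ^+ 2)
   = a ^+ 4 * (4 * v ^+ 2 - 4 * v * zeta - omega) by ring.
by rewrite hv mulr0.
Qed.

Theorem theorem3 (R : realType) (F : probability R R) (a b c alpha beta : R) :
  a != 0 -> 0 < b -> 0 < c ->
  0 < alpha -> alpha <= beta -> beta < c ->
  measure_support F = [set` `[alpha, beta]] ->
  let M1 := Rintegral F [set` `[alpha, beta]] (fun t => t) in
  let M2 := Rintegral F [set` `[alpha, beta]] (fun t => t ^+ 2) in
  let Delta := c - M1 in
  let sigma2 := M2 - M1 ^+ 2 in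
  0 < sigma2 ->
  let kappa := b / a in
  let omega := sigma2 / a ^+ 2 in
  let zeta := (b ^+ 2 - a * Delta) / a ^+ 2 in
  exists x : R -> R,
    [/\ symmetric_BNE F a b c alpha beta x,
        (forall y : R -> R, symmetric_BNE F a b c alpha beta y ->
           forall t, alpha <= t <= beta -> y t = x t),
        (exists p q : R, q < 0 /\ forall t, alpha <= t <= beta -> x t = p + q * t) &
        (\int[F]_(t in [set` `[alpha, beta]]) (x t)%:E)%E =
          (kappa - Num.sg a / Num.sqrt 2 * Num.sqrt (zeta + Num.sqrt (zeta ^+ 2 + omega)))%:E].
Proof.
move=> a0 b0 c0 al ab bc supp M1 M2 Delta sigma2 s0 kappa omega zeta.
have FD := @FD1 R F alpha beta supp ab.
have fFD : fine (F [set` `[alpha, beta]]) = 1.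
  by rewrite FD.
have alb : alpha < beta.
  rewrite lt_neqAle ab andbT; apply/negP => /eqP eab.
  have hD : forall t, t \in [set` `[alpha, beta]] -> t = alpha.
    by move=> t; rewrite inE /= in_itv /= -eab => /andP[h1 h2]; apply/le_anti; rewrite h1 h2.
  have hM1 : M1 = alpha.
    rewrite /M1 (@eq_Rintegral _ _ _ F _ (fun _ => alpha)); last by move=> t /hD.
    by rewrite Rintegral_cst ?fFD ?mulr1 //; exact: measurable_itv.
  have hM2 : M2 = alpha ^+ 2.
    rewrite /M2 (@eq_Rintegral _ _ _ F _ (fun _ => alpha ^+ 2)); last by move=> t /hD ->.
    by rewrite Rintegral_cst ?fFD ?mulr1 //; exact: measurable_itv.
  by move: s0; rewrite /sigma2 hM1 hM2 subrr ltxx.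
have a2 : 0 < a ^+ 2 by rewrite lt_def sqr_ge0 sqrf_eq0 a0.
have om0 : 0 < omega by rewrite /omega divr_gt0.
set s := Num.sqrt (zeta ^+ 2 + omega).
have s2 : s ^+ 2 = zeta ^+ 2 + omega.
  by rewrite sqr_sqrtr // addr_ge0 // ?sqr_ge0 // ltW.
have sge0 : 0 <= s by rewrite sqrtr_ge0.
have v0 : 0 < zeta + s.
  rewrite ltNge; apply/negP => h.
  have : s ^+ 2 <= zeta ^+ 2 by nra.
  lra.
set v := (zeta + s) / 2.
have vpos : 0 < v by rewrite /v divr_gt0.
set sv := Num.sqrt v.
have sv2 : sv ^+ 2 = v by rewrite sqr_sqrtr // ltW.
have svpos : 0 < sv by rewrite sqrtr_gt0.
set u := `|a| * sv.
have upos : 0 < u by rewrite mulr_gt0 // normr_gt0.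
have u0 : u != 0 by rewrite gt_eqF.
have u2 : u ^+ 2 = a ^+ 2 * v by rewrite exprMn sv2 -normrX ger0_norm // sqr_ge0.
set m1 := (b - u) / a.
have am1 : a * m1 = b - u by rewrite /m1 mulrCA mulfV ?mulr1.
set m2 := m1 ^+ 2 + sigma2 / (4 * u ^+ 2).
have hz : zeta * a ^+ 2 = b ^+ 2 - a * Delta by rewrite /zeta mulfVK // gt_eqF.
have hs : sigma2 = omega * a ^+ 2 by rewrite /omega mulfVK // gt_eqF.
have hv : 4 * v ^+ 2 - 4 * v * zeta - omega = 0.
  have -> : 4 * v ^+ 2 - 4 * v * zeta - omega = s ^+ 2 - zeta ^+ 2 - omega by rewrite /v; field.
  by rewrite s2; ring.
have hq := @quartic_v _ _ _ _ _ _ _ _ _ u2 hz hs hv.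
have K1 : 2 * u * m1 + a * m2 = Delta := @exist_alg _ a b Delta sigma2 u m1 m2 a0 u0 am1 erefl hq.
set p := (c - a * m2) / (2 * u).
set q := - (2 * u)^-1.
have hK : c - a * m2 = 2 * u * m1 + M1 by rewrite /Delta in K1; lra.
have [I1 I2] := @moments _ F alpha beta FD p q.
have [ix ix2] := affine_int F alpha beta p q.
have RI1 : Rintegral F [set` `[alpha, beta]] (fun t => p + q * t) = m1.
  by rewrite I1 -/M1 /p /q hK; field.
have RI2 : Rintegral F [set` `[alpha, beta]] (fun t => (p + q * t) ^+ 2) = m2.
  by rewrite I2 -/M1 -/M2 /p /q hK /m2 /sigma2; field.
have A1 : b - a * m1 = u by rewrite am1; ring.
have BNEx : symmetric_BNE F a b c alpha beta (fun t => p + q * t).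
  split.
  - by apply/measurable_realfun.measurable_EFinP; exact: (measurable_int F ix).
  - exact: ix.
  - exact: ix2.
  move=> th hth z.
  rewrite !(@util _ F a b c alpha beta FD _ th _ ix ix2) /= RI1 RI2 A1 lee_fin.
  set X := p + q * th.
  have hL : c - th - a * m2 = 2 * u * X by rewrite /X /p /q; field.
  rewrite hL.
  have h := mulr_ge0 (ltW upos) (sqr_ge0 (z - X)).
  have e : X * (2 * u * X) - X ^+ 2 * u - (z * (2 * u * X) - z ^+ 2 * u) = u * (z - X) ^+ 2 by ring.
  lra.
exists (fun t => p + q * t); split => //.
- move=> y hy t ht.
  have [Apos hform] := @bne_char _ F a b c alpha beta FD y alb hy.
  set m1' := Rintegral F [set` `[alpha, beta]] y in Apos hform.
  set m2' := Rintegral F [set` `[alpha, beta]] (fun t => y t ^+ 2) in hform.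
  set u' := b - a * m1' in Apos hform.
  have u'0 : u' != 0 by rewrite gt_eqF.
  set p' := (c - a * m2') / (2 * u').
  set q' := - (2 * u')^-1.
  have hy' : {in [set` `[alpha, beta]], y =1 (fun t => p' + q' * t)}.
    move=> t' ht'; rewrite hform; last by move: ht'; rewrite inE.
    by rewrite /p' /q'; field.
  have [I1' I2'] := @moments _ F alpha beta FD p' q'.
  have E1 : m1' = p' + q' * M1 by rewrite /m1' (@eq_Rintegral _ _ _ F _ _ _ hy') I1'.
  have E2 : m2' = p' ^+ 2 + 2 * p' * q' * M1 + q' ^+ 2 * M2.
    rewrite /m2' (@eq_Rintegral _ _ _ F _ (fun t => (p' + q' * t) ^+ 2)) ?I2' //.
    by move=> t' /hy' ->.
  have F1 : 2 * u' * m1' = Delta - a * m2' by rewrite E1 /p' /q' /Delta; field.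
  have F2 : 4 * u' ^+ 2 * m2' = (Delta - a * m2') ^+ 2 + sigma2.
    by rewrite {1}E2 /p' /q' /Delta /sigma2; field.
  have hq' : 4 * u' ^+ 4 - 4 * u' ^+ 2 * (b ^+ 2 - a * Delta) - a ^+ 2 * sigma2 = 0 := @quartic _ a b Delta sigma2 m1' m2' F1 F2.
  have C0 : 0 < a ^+ 2 * sigma2 by rewrite mulr_gt0.
  have h1 : 4 * (u ^+ 2) ^+ 2 - 4 * u ^+ 2 * (b ^+ 2 - a * Delta) - a ^+ 2 * sigma2 = 0.
    by rewrite -hq; ring.
  have h2 : 4 * (u' ^+ 2) ^+ 2 - 4 * u' ^+ 2 * (b ^+ 2 - a * Delta) - a ^+ 2 * sigma2 = 0.
    by rewrite -hq'; ring.
  have r := @root_uniq _ _ _ _ _ C0 (exprn_gt0 2 upos) (exprn_gt0 2 Apos) h1 h2.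
  have uu : u = u'.
    have e : (u - u') * (u + u') = 0 by rewrite -[RHS](subrr (u ^+ 2)) {2}r; ring.
    move/eqP: e; rewrite mulf_eq0 => /orP[/eqP|/eqP e]; first by move/eqP; rewrite subr_eq0 => /eqP.
    exfalso; lra.
  have mm1 : m1 = m1'.
    apply: (mulfI a0); rewrite am1.
    have : u' = b - a * m1' by [].
    lra.
  have mm2 : m2 = m2'.
    apply: (mulfI a0).
    have : 2 * u * m1 = 2 * u' * m1' by rewrite uu mm1.
    lra.
  rewrite (hy' t); last by rewrite inE.
  by rewrite /p' /q' /p /q -uu -mm2.
- exists p, q; split => //.
  by rewrite /q oppr_lt0 invr_gt0 mulr_gt0.
rewrite (@int_EFin _ F alpha beta _ ix) RI1; congr EFin.
have s2pos : 0 < Num.sqrt 2 :> R by rewrite sqrtr_gt0.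
have hsv : sv = Num.sqrt (zeta + s) / Num.sqrt 2.
  by rewrite /sv /v sqrtrM ?ltW // sqrtrV.
case: (ltgtP a 0) => [an|ap|/eqP]; last by rewrite (negbTE a0).
  rewrite /m1 /u /kappa hsv ltr0_norm // ltr0_sg //; field.
  by rewrite gt_eqF.
rewrite /m1 /u /kappa hsv gtr0_norm // gtr0_sg //; field.
by rewrite gt_eqF.
Qed.
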